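(* Let $L:\mathcal{S}\times\{0,1\}\to[0,1]$ be a Lyapunov function with respect to some stochastic Markov policy $\pi_s$ (so the constraint sets below are nonempty). Define the operator $$(\mathcal{T}_{\mathrm{exp}}V)(s,x)=\max_{\pi(\cdot\mid s,x)}\big\{(\mathcal{T}_d^{\pi}V)(s,x)\ :\ (\mathcal{T}_d^{\pi}L)(s,x)\le L(s,x)\big\},$$ where the maximum is over probability distributions $\pi(\cdot\mid s,x)$ on $\mathcal{A}$. Then $\mathcal{T}_{\mathrm{exp}}$ has a unique fixed point $V_{\mathrm{exp}}$, value iteration $V\mapsto\mathcal{T}_{\mathrm{exp}}V$ converges to it, and a policy $\pi_e$ attaining the maximum in $(\mathcal{T}_{\mathrm{exp}}V_{\mathrm{exp}})(s,x)$ at every $(s,x)$ satisfies $V^{\pi_e}=V_{\mathrm{exp}}$ and is an optimal solution of $$\max_{\pi}\ V^{\pi}(s_0,1)\quad\text{s.t.}\quad(\mathcal{T}_d^{\pi}L)(s,x)\le L(s,x)\ \ \forall (s,x)\in\mathcal{S}\times\{0,1\},$$ for the initial state $s_0$; in particular $V_{\mathrm{exp}}$ is the probability of unsafety under such a policy.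
   Context: Consider a Markov decision process with finite state set $\mathcal{S}$, finite action set $\mathcal{A}$ and transition probabilities $p(s'\mid s,a)$. A target (unsafe) set $\mathcal{G}\subseteq\mathcal{S}$ and a set of terminal states $\mathcal{S}_{\mathrm{term}}\subseteq\mathcal{S}$ are given, and $\mathcal{S}'=\mathcal{S}\setminus\mathcal{S}_{\mathrm{term}}$. The process is augmented with a variable $x_t\in\{0,1\}$ defined by $x_{t+1}=x_t\mathbf{1}_{\mathcal{G}^c}(s_t)$, so $(s_t,x_t)$ is Markov. A (stochastic Markov) policy $\pi$ gives probabilities $\pi(a\mid s,x)$. Let $T^*$ be the first time $t$ with $s_t\in\mathcal{S}_{\mathrm{term}}$. Standing assumption: there is an integer $m$ such that, for every policy and every initial state, $\mathcal{S}_{\mathrm{term}}$ is reached within $m$ steps with positive probability. The stage cost is $d(s,x)=x\,\mathbf{1}_{\mathcal{G}}(s)$ and $V^\pi(s,x)=\mathbb{E}^\pi\big[\sum_{t=0}^{T^*-1}d(s_t,x_t)\mid (s_0,x_0)=(s,x)\big]$ (probability of unsafety when $x=1$). The Bellman operator $\mathcal{T}_d^\pi$ acts on $V:\mathcal{S}\times\{0,1\}\to\mathbb{R}$ by $(\mathcal{T}_d^\pi V)(s,x)=d(s,x)+\sum_{a}\pi(a\mid s,x)\sum_{s'}p(s'\mid s,a)\,V(s',x\mathbf{1}_{\mathcal{G}^c}(s))$ for $s\in\mathcal{S}'$, and $(\mathcal{T}_d^\pi V)(s,x)=0$ for $s\in\mathcal{S}_{\mathrm{term}}$. Given $\alpha\in(0,1)$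 and $S_0\subseteq\mathcal{S}$, a function $L:\mathcal{S}\times\{0,1\}\to[0,1]$ is a Lyapunov function with respect to a policy $\pi$ if $(\mathcal{T}_d^{\pi}L)(s,x)\le L(s,x)$ for all $(s,x)\in\mathcal{S}\times\{0,1\}$ and $L(s,1)\le\alpha$ for all $s\in S_0$. *)

(* Defs.v *)
From HB Require Import structures.
From mathcomp Require Import all_boot.
From Stdlib Require Import Reals.
Set Implicit Arguments. Unset Strict Implicit. Unset Printing Implicit Defensive.
Open Scope R_scope.

HB.instance Definition _ := Monoid.isComLaw.Build R R0 Rplus
  (fun x y z => esym (Rplus_assoc x y z)) Rplus_comm Rplus_0_l.

Definition rsum (T : finType) (f : T -> R) : R := \big[Rplus/R0]_(i : T) f i.

Section MDP.
Variables (S A : finType).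
(* p s a s' = p(s' | s, a) *)
Variable p : S -> A -> S -> R.
(* G : unsafe target set, Sterm : terminal states *)
Variables (G Sterm : pred S).

Definition is_kernel : Prop :=
  (forall s a s', 0 <= p s a s') /\ (forall s a, rsum (p s a) = 1).

Definition is_dist (q : A -> R) : Prop :=
  (forall a, 0 <= q a) /\ rsum q = 1.

(* stochastic Markov policy on the augmented state (s,x), x : bool ~ {0,1} *)
Definition is_policy (pi : S -> bool -> A -> R) : Prop :=
  forall s x, is_dist (pi s x).

Definition dcost (s : S) (x : bool) : R := if x && G s then 1 else 0.

Definition xnext (s : S) (x : bool) : bool := x && ~~ G s.

(* Bellman operator at (s,x), depending only on the local distribution
   q = pi(. | s, x) *)
Definition Tloc (q : A -> R) (V : S -> bool -> R) (s : S) (x : bool) : R :=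
  if Sterm s then 0
  else dcost s x + rsum (fun a => q a * rsum (fun s' => p s a s' * V s' (xnext s x))).

Definition Td (pi : S -> bool -> A -> R) (V : S -> bool -> R) (s : S) (x : bool) : R :=
  Tloc (pi s x) V s x.

Definition is_lyapunov (alpha : R) (S0 : pred S) (pi : S -> bool -> A -> R)
    (L : S -> bool -> R) : Prop :=
  (forall s x, 0 <= L s x <= 1) /\
  (forall s x, Td pi L s x <= L s x) /\
  (forall s, S0 s -> L s true <= alpha).

(* mu pi s0 x0 t s x = P^pi( s_t = s, x_t = x, s_0,...,s_{t-1} not terminal
   | (s_0,x_0) = (s0,x0) ) *)
Fixpoint mu (pi : S -> bool -> A -> R) (s0 : S) (x0 : bool) (t : nat)
    (s' : S) (x' : bool) : R :=
  match t with
  | O => if (s' == s0) && (x' == x0) then 1 else 0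
  | t'.+1 =>
      rsum (fun s => rsum (fun x : bool =>
        if Sterm s then 0
        else if x' == xnext s x then
          mu pi s0 x0 t' s x * rsum (fun a => pi s x a * p s a s')
        else 0))
  end.

(* E^pi[ d(s_t,x_t) 1{t < T*} ] *)
Definition cost_term (pi : S -> bool -> A -> R) (s0 : S) (x0 : bool) (t : nat) : R :=
  rsum (fun s => rsum (fun x : bool =>
    if Sterm s then 0 else mu pi s0 x0 t s x * dcost s x)).

(* P^pi( T* = t ) *)
Definition term_prob (pi : S -> bool -> A -> R) (s0 : S) (x0 : bool) (t : nat) : R :=
  rsum (fun s => rsum (fun x : bool =>
    if Sterm s then mu pi s0 x0 t s x else 0)).

(* v = V^pi(s0,x0) = E^pi[ sum_{t=0}^{T*-1} d(s_t,x_t) ]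
   = sum_{t>=0} E^pi[ d(s_t,x_t) 1{t < T*} ] *)
Definition HasValue (pi : S -> bool -> A -> R) (s0 : S) (x0 : bool) (v : R) : Prop :=
  Un_cv (fun n => sum_f_R0 (cost_term pi s0 x0) n) v.

Definition standing_assumption : Prop :=
  exists m : nat, forall pi, is_policy pi -> forall s0 x0,
    0 < sum_f_R0 (term_prob pi s0 x0) m.

(* W = T_exp V : W(s,x) is the maximum of (T_d^q V)(s,x) over distributions q
   on A with (T_d^q L)(s,x) <= L(s,x)  (attained, and an upper bound). *)
Definition IsTexp (L V W : S -> bool -> R) : Prop :=
  forall s x,
    (exists q, is_dist q /\ Tloc q L s x <= L s x /\ Tloc q V s x = W s x) /\
    (forall q, is_dist q -> Tloc q L s x <= L s x -> Tloc q V s x <= W s x).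

End MDP.

(* Main.v *)
Require Import Defs.
From HB Require Import structures.
From mathcomp Require Import all_boot.
From Stdlib Require Import Reals.
From Stdlib Require Import Lra Psatz IndefiniteDescription FunctionalExtensionality.
Open Scope R_scope.
Set Implicit Arguments. Unset Strict Implicit.

Definition Rleb (x y : R) : bool := if Rle_dec x y then true else false.
Lemma RlebP x y : reflect (x <= y) (Rleb x y).
Proof. rewrite /Rleb; case: Rle_dec => h; constructor => //. Qed.
Definition Rltb (x y : R) : bool := if Rlt_dec x y then true else false.
Lemma RltbP x y : reflect (x < y) (Rltb x y).
Proof. rewrite /Rltb; case: Rlt_dec => h; constructor => //. Qed.

Section RSum.
Variable T : finType.
Implicit Types f g : T -> R.

Lemma rsum_ext f g : (forall i, f i = g i) -> rsum f = rsum g.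
Proof. by move=> h; apply: eq_bigr => i _. Qed.

Lemma rsum_le f g : (forall i, f i <= g i) -> rsum f <= rsum g.
Proof.
move=> h; rewrite /rsum; apply: (big_ind2 (fun a b => a <= b)) => //.
- exact: Rle_refl.
- by move=> *; lra.
Qed.

Lemma rsum_plus f g : rsum (fun i => f i + g i) = rsum f + rsum g.
Proof. by rewrite /rsum big_split. Qed.

Lemma rsum_scal c f : rsum (fun i => c * f i) = c * rsum f.
Proof.
rewrite /rsum; apply: (big_ind2 (fun a b => a = c * b)) => //.
- by rewrite Rmult_0_r.
- by move=> a1 a2 b1 b2 -> ->; ring.
Qed.

Lemma rsum_scalr c f : rsum (fun i => f i * c) = rsum f * c.
Proof. rewrite Rmult_comm -rsum_scal; apply: rsum_ext => i; ring. Qed.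

Lemma rsum_opp f : rsum (fun i => - f i) = - rsum f.
Proof. have := rsum_scal (-1) f => h. rewrite -(rsum_ext (f:=fun i => -1 * f i)) ?h; [ring|move=> i; ring]. Qed.

Lemma rsum_minus f g : rsum (fun i => f i - g i) = rsum f - rsum g.
Proof. rewrite /Rminus rsum_plus rsum_opp //. Qed.

Lemma rsum0 f : (forall i, f i = 0) -> rsum f = 0.
Proof. by move=> h; rewrite /rsum big1. Qed.

Lemma rsum_nonneg f : (forall i, 0 <= f i) -> 0 <= rsum f.
Proof. move=> h; rewrite -(rsum0 (f:=fun _ => 0)) //; exact: rsum_le. Qed.

Lemma rsum_pick f i : (forall j, 0 <= f j) -> f i <= rsum f.
Proof.
move=> h; rewrite /rsum (bigD1 i) //=.
match goal with |- _ <= _ + ?X => have : 0 <= X end.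
  by apply: (big_ind (fun a => 0 <= a)) => //; [lra| move=> *; lra].
lra.
Qed.

Lemma rsum_delta (i : T) (c : R) : rsum (fun j => if j == i then c else 0) = c.
Proof.
rewrite /rsum (bigD1 i) //= eqxx big1 ?Rplus_0_r // => j /negbTE ->; done.
Qed.

Lemma rsum_delta_mul (i : T) (h : T -> R) :
  rsum (fun j => (if j == i then 1 else 0) * h j) = h i.
Proof.
rewrite -(rsum_delta i (h i)); apply: rsum_ext => j.
by case: eqP => [->|_]; ring.
Qed.

End RSum.

Lemma rsum_exchange (T U : finType) (F : T -> U -> R) :
  rsum (fun i => rsum (fun j => F i j)) = rsum (fun j => rsum (fun i => F i j)).
Proof. by rewrite /rsum exchange_big. Qed.

Lemma rsum_bool (f : bool -> R) : rsum f = f true + f false.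
Proof. by rewrite /rsum big_bool. Qed.

Lemma list_max (T : eqType) (g : T -> R) (l : seq T) :
  l != [::] -> exists t, t \in l /\ forall t', t' \in l -> g t' <= g t.
Proof.
elim: l => // t l IH _.
case: (altP (l =P [::])) => [->|hl].
  by exists t; split; [rewrite inE eqxx | move=> t'; rewrite inE => /eqP ->; lra].
have [t1 [h1 h2]] := IH hl.
case: (Rle_dec (g t) (g t1)) => h.
  exists t1; split; first by rewrite inE h1 orbT.
  by move=> t'; rewrite inE => /orP [/eqP ->|/h2].
exists t; split; first by rewrite inE eqxx.
move=> t'; rewrite inE => /orP [/eqP ->|/h2]; lra.
Qed.

Lemma list_max0 (T : eqType) (g : T -> R) (l : seq T) :
  exists v, 0 <= v /\ (v = 0 \/ exists t, t \in l /\ v = g t) /\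
    forall t, t \in l -> g t <= v.
Proof.
elim: l => [|t l [v [h0 [h1 h2]]]].
  by exists 0; split; [lra|split; [left|]].
case: (Rle_dec (g t) v) => h.
  exists v; split => //; split.
    case: h1 => [->|[t1 [ht1 ->]]]; [by left| right; exists t1; rewrite inE ht1 orbT; by split].
  by move=> t'; rewrite inE => /orP [/eqP ->|/h2].
exists (g t); split; first lra.
split; first by right; exists t; rewrite inE eqxx.
move=> t'; rewrite inE => /orP [/eqP ->|/h2]; lra.
Qed.

Section LP.
Variable A : finType.
Variables (f c : A -> R) (b : R).

Definition theta (a a' : A) : R :=
  if Rle_dec (c a') b then 1 else (c a' - b) / (c a' - c a).

Lemma theta_prop a a' : c a <= b ->
  0 <= theta a a' <= 1 /\ theta a a' * c a + (1 - theta a a') * c a' <= b.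
Proof.
move=> ha; rewrite /theta; case: Rle_dec => h /=.
  split; [lra|lra].
set t := (c a' - b) / (c a' - c a).
have ht : t * (c a' - c a) = c a' - b by rewrite /t; field; lra.
split; [split|]; nra.
Qed.

Lemma theta_mix a a' : c a <= b -> b < c a' ->
  theta a a' * (c a' - c a) = c a' - b.
Proof.
move=> ha hb; rewrite /theta; case: Rle_dec => h /=; first lra.
field; lra.
Qed.

Definition cand (a a' : A) : A -> R := fun i =>
  theta a a' * (if i == a then 1 else 0) + (1 - theta a a') * (if i == a' then 1 else 0).

Lemma cand_sum a a' (h : A -> R) :
  rsum (fun i => cand a a' i * h i) = theta a a' * h a + (1 - theta a a') * h a'.
Proof.
rewrite -(rsum_delta_mul a h) -(rsum_delta_mul a' h) -!rsum_scal -rsum_plus.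
apply: rsum_ext => i; rewrite /cand; ring.
Qed.

Lemma cand_dist a a' : c a <= b -> is_dist (cand a a').
Proof.
move=> ha; have [[h0 h1] _] := theta_prop a' ha.
split.
  move=> i; rewrite /cand; case: (i == a); case: (i == a'); nra.
have := cand_sum a a' (fun _ => 1).
rewrite (rsum_ext (g := cand a a')) => [->|i]; ring.
Qed.

Lemma LP_attain :
  (exists q0, is_dist q0 /\ rsum (fun a => q0 a * c a) <= b) ->
  exists q, is_dist q /\ rsum (fun a => q a * c a) <= b /\
   forall q', is_dist q' -> rsum (fun a => q' a * c a) <= b ->
     rsum (fun a => q' a * f a) <= rsum (fun a => q a * f a).
Proof.
move=> [q0 [[q0pos q0sum] hq0]].
have [a0 _] : exists a0 : A, true.
  case: (pickP (fun _ : A => true)) => [a0 _|h]; first by exists a0.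
  exfalso; move: q0sum; rewrite /rsum big1 => [|i _]; [lra|by have := h i].
have hne : enum A != [::].
  by apply/eqP => e; move: (mem_enum A a0); rewrite e in_nil inE.
have [amin [_ hamin]] := @list_max _ (fun a => - c a) (enum A) hne.
have hmin : c amin <= b.
  apply: Rle_trans hq0.
  have -> : c amin = rsum (fun a => q0 a * c amin) by rewrite rsum_scalr q0sum; ring.
  apply: rsum_le => a; apply: Rmult_le_compat_l => //.
  have := hamin a (mem_enum _ a); lra.
set l := [seq t <- enum {: A * A} | Rleb (c t.1) b].
have hl : (amin, amin) \in l by rewrite mem_filter mem_enum andbT; apply/RlebP.
pose val t := theta t.1 t.2 * f t.1 + (1 - theta t.1 t.2) * f t.2.
have hne' : l != [::] by apply/eqP => e; move: hl; rewrite e in_nil.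
have [[a1 a2] [ht hbest]] := @list_max _ val l hne'.
have ha1 : c a1 <= b by move: ht; rewrite mem_filter /= => /andP [/RlebP].
set m := val (a1, a2).
have hpair : forall a a', c a <= b -> val (a, a') <= m.
  move=> a a' h; apply: hbest; rewrite mem_filter mem_enum andbT /=; exact/RlebP.
exists (cand a1 a2); split; first exact: cand_dist.
split; first by rewrite cand_sum; have [_ ?] := theta_prop a2 ha1.
move=> q' [q'pos q'sum] hq'.
have [lam [hlam0 [hlam1 hlam2]]] :=
  @list_max0 _ (fun a => (f a - m) / (c a - b)) [seq a <- enum A | ~~ Rleb (c a) b].
have key : forall a, f a <= m + lam * (c a - b).
  move=> a; case: (Rle_dec (c a) b) => hca.
  - have hfa : f a <= m.
      have := hpair a a hca; rewrite /val /theta /=; case: Rle_dec => //= _; lra.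
    case: hlam1 => [->|[a' [ha' ->]]]; first lra.
    move: ha'; rewrite mem_filter mem_enum andbT => /RlebP hca'.
    have hca'' : b < c a' by lra.
    have hv := hpair a a' hca; rewrite /val /= in hv.
    have hth := theta_mix hca hca''.
    set th := theta a a' in hv hth.
    set r := (f a' - m) / (c a' - b).
    have hr : r * (c a' - b) = f a' - m by rewrite /r; field; lra.
    have h1 : (c a' - b) * (f a - m) + (b - c a) * (f a' - m) <= 0.
      have : (th * (f a - m) + (1 - th) * (f a' - m)) * (c a' - c a) <= 0.
        have h0 : th * (f a - m) + (1 - th) * (f a' - m) <= 0 by nra.
        have hD : 0 < c a' - c a by lra.
        nra.
      nra.
    have h2 : (c a' - b) * ((f a - m) + (b - c a) * r) <= 0.
      have -> : (c a' - b) * ((f a - m) + (b - c a) * r)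
               = (c a' - b) * (f a - m) + (b - c a) * (r * (c a' - b)) by ring.
      by rewrite hr.
    have h3 : (f a - m) + (b - c a) * r <= 0.
      apply: Rnot_lt_le => h4; have : 0 < (c a' - b) * ((f a - m) + (b - c a) * r).
        apply: Rmult_lt_0_compat; lra.
      lra.
    lra.
  - have hin : a \in [seq a <- enum A | ~~ Rleb (c a) b].
      by rewrite mem_filter mem_enum andbT; apply/negP => /RlebP.
    have := hlam2 a hin.
    have hpos : 0 < c a - b by lra.
    move=> hh.
    have : (f a - m) / (c a - b) * (c a - b) <= lam * (c a - b).
      by apply: Rmult_le_compat_r; lra.
    have -> : (f a - m) / (c a - b) * (c a - b) = f a - m by field; lra.
    lra.
apply: (Rle_trans _ (rsum (fun a => q' a * (m + lam * (c a - b))))).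
  by apply: rsum_le => a; apply: Rmult_le_compat_l => //; apply: key.
have -> : rsum (fun a => q' a * (m + lam * (c a - b)))
   = (m - lam * b) * rsum q' + lam * rsum (fun a => q' a * c a).
  rewrite -!rsum_scal -rsum_plus; apply: rsum_ext => a; ring.
rewrite cand_sum q'sum.
have : lam * rsum (fun a => q' a * c a) <= lam * b by apply: Rmult_le_compat_l.
rewrite -/(val (a1, a2)) -/m; lra.
Qed.

End LP.

Lemma pow_le1 (x : R) (n : nat) : 0 <= x <= 1 -> x ^ n <= 1.
Proof.
move=> hx; elim: n => /= [|n IH]; first lra.
have : 0 <= x ^ n by apply: pow_le; lra.
nra.
Qed.

Lemma pow_addn (x : R) (n m : nat) : x ^ (addn n m) = x ^ n * x ^ m.
Proof. elim: n => [|n IH]; [rewrite add0n /=; ring| rewrite addSn /= IH; ring]. Qed.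

Lemma bernoulli (n : nat) (d : R) : 0 <= d <= 1 -> 1 - INR n * d <= (1 - d) ^ n.
Proof.
move=> hd; elim: n => [|n IH]; first by rewrite /=; lra.
rewrite S_INR /=.
have h0 : 0 <= INR n by apply: pos_INR.
nra.
Qed.

Lemma list_pmin (T : eqType) (g : T -> R) (l : seq T) :
  exists c, 0 < c <= 1 /\ forall t, t \in l -> 0 < g t -> c <= g t.
Proof.
elim: l => [|t l [c [hc h]]]; first by exists 1; split => //; lra.
case: (Rlt_dec 0 (g t)) => ht.
  exists (Rmin c (g t)); split.
    split; [apply: Rmin_pos; lra| apply: (Rle_trans _ c); [exact: Rmin_l|lra]].
  move=> t'; rewrite inE => /orP [/eqP -> _|/h h' ]; first exact: Rmin_r.
  move=> h''; apply: (Rle_trans _ c); [exact: Rmin_l|exact: h'].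
exists c; split => // t'; rewrite inE => /orP [/eqP -> //|/h //].
Qed.

Section MDP.
Variables (S A : finType) (p : S -> A -> S -> R) (G Sterm : pred S).
Hypothesis Hp : is_kernel p.

Definition gsum (u : S -> bool -> R) (s : S) (x : bool) (a : A) : R :=
  rsum (fun s' => p s a s' * u s' (xnext G s x)).
Definition PL (q : A -> R) (u : S -> bool -> R) (s : S) (x : bool) : R :=
  if Sterm s then 0 else rsum (fun a => q a * gsum u s x a).

Lemma PL_term q u s x : Sterm s -> PL q u s x = 0.
Proof. by rewrite /PL => ->. Qed.
Lemma PL_nonterm q u s x : ~~ Sterm s -> PL q u s x = rsum (fun a => q a * gsum u s x a).
Proof. by rewrite /PL => /negbTE ->. Qed.

Lemma p_pos s a s' : 0 <= p s a s'. Proof. by case: Hp. Qed.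
Lemma p_sum s a : rsum (p s a) = 1. Proof. by case: Hp. Qed.

Lemma gsum_le u v s x a : (forall s x, u s x <= v s x) -> gsum u s x a <= gsum v s x a.
Proof. move=> h; apply: rsum_le => s'; apply: Rmult_le_compat_l; [exact: p_pos|exact: h]. Qed.

Lemma gsum_lin al be u v s x a :
  gsum (fun s x => al * u s x + be * v s x) s x a = al * gsum u s x a + be * gsum v s x a.
Proof. rewrite /gsum -!rsum_scal -rsum_plus; apply: rsum_ext => s'; ring. Qed.

Lemma gsum_const M s x a : gsum (fun _ _ => M) s x a = M.
Proof. by rewrite /gsum rsum_scalr p_sum Rmult_1_l. Qed.

Lemma PL_le q u v s x : (forall a, 0 <= q a) -> (forall s x, u s x <= v s x) ->
  PL q u s x <= PL q v s x.
Proof.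
move=> hq h; rewrite /PL; case: (Sterm s); first lra.
apply: rsum_le => a; apply: Rmult_le_compat_l => //; exact: gsum_le.
Qed.

Lemma PL_lin q al be u v s x :
  PL q (fun s x => al * u s x + be * v s x) s x = al * PL q u s x + be * PL q v s x.
Proof.
rewrite /PL; case: (Sterm s); first ring.
rewrite -!rsum_scal -rsum_plus; apply: rsum_ext => a; rewrite gsum_lin; ring.
Qed.

Lemma PL_const q M s x : is_dist q -> PL q (fun _ _ => M) s x = if Sterm s then 0 else M.
Proof.
move=> [_ hq]; rewrite /PL; case: (Sterm s) => //.
rewrite (rsum_ext (g := fun a => q a * M)) ?rsum_scalr ?hq; [ring|move=> a; by rewrite gsum_const].
Qed.

Lemma PL_bound q u M s x : is_dist q -> 0 <= M -> (forall s x, u s x <= M) ->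
  PL q u s x <= M.
Proof.
move=> hq hM h.
have h1 : PL q u s x <= PL q (fun _ _ => M) s x by apply: PL_le => //; case: hq.
rewrite PL_const // in h1; move: h1; case: (Sterm s); lra.
Qed.

Lemma PL_nonneg q u s x : (forall a, 0 <= q a) -> (forall s x, 0 <= u s x) -> 0 <= PL q u s x.
Proof.
move=> hq h; rewrite /PL; case: (Sterm s); first lra.
apply: rsum_nonneg => a; apply: Rmult_le_pos => //.
apply: rsum_nonneg => s'; apply: Rmult_le_pos; [exact: p_pos|exact: h].
Qed.

Lemma PL_abs q u s x : (forall a, 0 <= q a) ->
  Rabs (PL q u s x) <= PL q (fun s x => Rabs (u s x)) s x.
Proof.
move=> hq; apply: Rabs_le; split.
  have e := PL_lin q (-1) 0 (fun s x => Rabs (u s x)) u s x.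
  have l := @PL_le q (fun s x => -1 * Rabs (u s x) + 0 * u s x) u s x hq.
  have : forall s' x', -1 * Rabs (u s' x') + 0 * u s' x' <= u s' x'.
    by move=> s' x'; have := Rle_abs (- u s' x'); rewrite Rabs_Ropp; lra.
  move/l; rewrite e; lra.
apply: PL_le => // s' x'; exact: Rle_abs.
Qed.

Lemma Tloc_diff q V V' s x :
  Tloc p G Sterm q V s x - Tloc p G Sterm q V' s x = PL q (fun s x => V s x - V' s x) s x.
Proof.
have := PL_lin q 1 (-1) V V' s x.
rewrite (_ : PL q (fun s x => 1 * V s x + -1 * V' s x) s x = PL q (fun s x => V s x - V' s x) s x).
  move=> ->; rewrite /Tloc /PL /gsum; case: (Sterm s); ring.
by rewrite /PL; case: (Sterm s) => //; apply: rsum_ext => a; congr (_ * _); apply: rsum_ext => s'; congr (_ * _); ring.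
Qed.

End MDP.

Lemma sum_f_R0_zero (f : nat -> R) m : (forall t, f t = 0) -> sum_f_R0 f m = 0.
Proof. move=> h; elim: m => /= [|m ->]; rewrite h //; ring. Qed.

Section Decay.
Variables (S A : finType) (p : S -> A -> S -> R) (G Sterm : pred S).
Hypothesis Hp : is_kernel p.

Definition hyps (f : nat -> S -> bool -> R) : Prop :=
  (forall i s x, 0 <= f i s x) /\
  (forall i s x, exists q, is_dist q /\ f i.+1 s x <= PL p G Sterm q (f i) s x).

Lemma hyps_bound f M : hyps f -> 0 <= M -> (forall s x, f 0%nat s x <= M) ->
  forall i s x, f i s x <= M.
Proof.
move=> [h0 h1] hM hf; elim=> [//|i IH] s x.
have [q [hq hle]] := h1 i s x; apply: Rle_trans hle _; exact: PL_bound.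
Qed.

Lemma hyps_shift f k : hyps f -> hyps (fun i => f (k + i)%nat).
Proof.
move=> [h0 h1]; split => // i s x; rewrite addnS; exact: h1.
Qed.

Definition newset (D : {set S}) : {set S} :=
  [set s | [forall a : A, [exists s', (s' \in D) && Rltb 0 (p s a s')]]].

Fixpoint Dk (k : nat) : {set S} :=
  if k is k'.+1 then [set s | Sterm s] :|: newset (Dk k') else [set s | Sterm s].

Lemma Dk_term k s : Sterm s -> s \in Dk k.
Proof. by case: k => [|k] /= hs; rewrite !inE hs. Qed.

Section Claim.
Variable c : R.
Hypothesis hc : 0 < c <= 1.
Hypothesis hcp : forall s a s', 0 < p s a s' -> c <= p s a s'.

Lemma claim n f M : hyps f -> 0 <= M -> (forall s x, f 0%nat s x <= M) ->
  forall s, s \in Dk n -> forall x, f n.+1 s x <= M * (1 - c ^ n.+1).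
Proof.
move=> hf hM h0; have hb := hyps_bound hf hM h0; case: hf => [fpos fstep].
have hpow : forall k, 0 <= 1 - c ^ k by move=> k; have := pow_le1 k (conj (Rlt_le _ _ (proj1 hc)) (proj2 hc)); lra.
have hterm : forall k s x, Sterm s -> f k.+1 s x <= M * (1 - c ^ k.+1).
  move=> k s x hs; have [q [_ hle]] := fstep k s x; rewrite PL_term // in hle.
  have := hpow k.+1; nra.
elim: n => [|n IH] s hs x.
  by rewrite /= inE in hs; apply: hterm.
rewrite /= !inE in hs; case/orP: hs => hs; first exact: hterm.
case hst: (Sterm s); first exact: hterm.
have [q [[qpos qsum] hle]] := fstep n.+1 s x.
rewrite PL_nonterm ?hst // in hle; apply: Rle_trans hle _.
set B := M * (1 - c ^ n.+2).
have -> : B = rsum (fun a => q a * B) by rewrite rsum_scalr qsum; ring.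
apply: rsum_le => a; apply: Rmult_le_compat_l => //.
move: hs => /forallP /(_ a) /existsP [s' /andP [hs' /RltbP hp]].
set x'' := xnext G s x.
have e : gsum p G (f n.+1) s x a
   = M * rsum (p s a) - rsum (fun s1 => p s a s1 * (M - f n.+1 s1 x'')).
  rewrite -rsum_scal -rsum_minus; apply: rsum_ext => s1; rewrite /x''; ring.
rewrite e p_sum //.
have hpick := @rsum_pick _ (fun s1 => p s a s1 * (M - f n.+1 s1 x'')) s'.
have hpick' : p s a s' * (M - f n.+1 s' x'') <= rsum (fun s1 => p s a s1 * (M - f n.+1 s1 x'')).
  apply: hpick => s1; apply: Rmult_le_pos; first exact: p_pos.
  have := hb n.+1 s1 x''; lra.
have hIH := IH s' hs' x''.
have hcp1 := hcp hp.
have hcn : 0 <= c ^ n.+1 by apply: pow_le; lra.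
have : c * (M * c ^ n.+1) <= p s a s' * (M - f n.+1 s' x'').
  apply: Rmult_le_compat => //; [lra|nra|lra].
rewrite /B /=; rewrite /= in hIH hcn; nra.
Qed.
End Claim.

Lemma newset_mono (D D' : {set S}) : D \subset D' -> newset D \subset newset D'.
Proof.
move=> hD; apply/subsetP => s; rewrite !inE => /forallP h; apply/forallP => a.
have /existsP [s' /andP [h1 h2]] := h a; apply/existsP; exists s'.
by rewrite h2 andbT (subsetP hD).
Qed.

Lemma Dk_mono k : Dk k \subset Dk k.+1.
Proof.
elim: k => [|k IH] /=.
  by apply/subsetP => s; rewrite !inE => ->.
by apply: setUS; apply: newset_mono.
Qed.

Lemma Dk_stable : exists j, Dk j = Dk j.+1.
Proof.
have H : forall k, (exists j, Dk j = Dk j.+1) \/ (k <= #|Dk k|)%nat.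
  elim => [|k [IH|IH]]; [by right|by left|].
  case: (eqVneq (Dk k.+1) (Dk k.+2)) => e; first by left; exists k.+1.
  case: (eqVneq (Dk k) (Dk k.+1)) => e'; first by left; exists k.
  right; have hp : Dk k \proper Dk k.+1 by rewrite properEneq e' Dk_mono.
  exact: leq_ltn_trans IH (proper_card hp).
case: (H #|S|.+1) => // h; exfalso.
by have := leq_trans h (max_card (Dk #|S|.+1)); rewrite ltnn.
Qed.

Lemma Dk_full j : standing_assumption p G Sterm -> Dk j = Dk j.+1 -> Dk j = setT.
Proof.
move=> [m hm] e; set D := Dk j.
apply/setP => s0; rewrite inE; apply/negPn/negP => hs0.
have hD : forall s, s \notin D -> exists a, forall s', s' \in D -> ~ 0 < p s a s'.
  move=> s hs; have : s \notin Dk j.+1 by rewrite -e.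
  rewrite /= inE negb_or => /andP [_]; rewrite inE negb_forall => /existsP [a].
  rewrite negb_exists => /forallP h; exists a => s' hs' hp.
  have hb : Rltb 0 (p s a s') by apply/RltbP.
  by move: (h s'); rewrite hs' hb.
have [a0 _] := hD s0 hs0.
pose good s a := [forall s', (s' \in D) ==> ~~ Rltb 0 (p s a s')].
pose pi := fun (s : S) (x : bool) (a : A) =>
  match [pick a' | good s a'] with Some a' => if a == a' then 1 else 0
  | None => if a == a0 then 1 else 0 end.
have hpi : is_policy pi.
  move=> s x; rewrite /pi; case: pickP => [a' _|_]; (split; [move=> a; case: (_ == _); lra|]);
  exact: rsum_delta.
have key : forall s x s', s \notin D -> s' \in D -> rsum (fun a => pi s x a * p s a s') = 0.
  move=> s x s' hs hs'; rewrite /pi; case: pickP => [a' ga'|hnone].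
    rewrite rsum_delta_mul.
    move/forallP: ga' => /(_ s'); rewrite hs' /= => /RltbP hn.
    have := p_pos Hp s a' s'; lra.
  exfalso; have [a ha] := hD s hs; have := hnone a; rewrite /good.
  have -> : [forall s'0, (s'0 \in D) ==> ~~ Rltb 0 (p s a s'0)] = true.
    apply/forallP => s1; apply/implyP => hs1; apply/negP => /RltbP; exact: ha.
  done.
have muz : forall t s x, s \in D -> mu p G Sterm pi s0 true t s x = 0.
  elim => [|t IH] s x hs /=.
    case: eqP => [e1|//]; by subst; rewrite hs in hs0.
  apply: rsum0 => s1; apply: rsum0 => x1.
  case: (Sterm s1) => //; case: (_ == _) => //.
  case hs1 : (s1 \in D); first by rewrite IH //; ring.
  by rewrite key ?hs1 //; ring.
have := hm pi hpi s0 true.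
rewrite sum_f_R0_zero; first lra.
move=> t; apply: rsum0 => s; apply: rsum0 => x.
case hst: (Sterm s) => //; apply: muz; exact: Dk_term.
Qed.

Lemma decay : standing_assumption p G Sterm ->
  exists rho K, 0 <= rho < 1 /\ 0 < K /\
  forall f M, hyps f -> 0 <= M -> (forall s x, f 0%nat s x <= M) ->
  forall k s x, f k s x <= K * M * rho ^ k.
Proof.
move=> hst.
have [c [hc hcp']] := list_pmin (fun t : S * A * S => p t.1.1 t.1.2 t.2) (enum {: S * A * S}).
have hcp : forall s a s', 0 < p s a s' -> c <= p s a s'.
  by move=> s a s' h; exact: (hcp' (s, a, s') (mem_enum _ _) h).
have [j ej] := Dk_stable; have hfull := Dk_full hst ej.
set N := j.+1; set gam := 1 - c ^ N.
have step : forall f M k, hyps f -> 0 <= M -> (forall s x, f k s x <= M) ->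
    forall s x, f (k + N)%nat s x <= M * gam.
  move=> f M k hf hM hk s x.
  have h0 : forall s x, (fun i => f (k + i)%nat) 0%nat s x <= M by move=> s1 x1 /=; rewrite addn0.
  have := @claim c hc hcp j _ M (hyps_shift k hf) hM h0 s _ x.
  by rewrite hfull inE => /(_ isT).
have hcN : 0 < c ^ N by apply: pow_lt; lra.
have hcN1 : c ^ N <= 1 by apply: pow_le1; lra.
have hN : 1 <= INR N by rewrite /N S_INR; have := pos_INR j; lra.
set d := c ^ N / (2 * INR N).
have hd : 0 < d <= 1/2.
  rewrite /d; split; first by apply: Rdiv_lt_0_compat; lra.
  have hdd : d * (2 * INR N) = c ^ N by rewrite /d; field; lra.
  have : 0 < d by rewrite /d; apply: Rdiv_lt_0_compat; lra.
  rewrite -/d; nra.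
set rho := 1 - d.
have hrho : 0 < rho < 1 by rewrite /rho; lra.
have hrhoN : gam <= rho ^ N.
  have := @bernoulli N d ltac:(lra).
  have -> : INR N * d = c ^ N / 2 by rewrite /d; field; lra.
  rewrite /gam /rho; lra.
have hrN : 0 < rho ^ N by apply: pow_lt; lra.
exists rho, (/ rho ^ N); split; first lra.
split; first exact: Rinv_0_lt_compat.
move=> f M hf hM h0.
have hKM : forall k, 0 <= / rho ^ N * M * rho ^ k.
  move=> k; apply: Rmult_le_pos; last by apply: pow_le; lra.
  apply: Rmult_le_pos => //; apply: Rlt_le; exact: Rinv_0_lt_compat.
have small : forall k, (k < N)%nat -> forall s x, f k s x <= / rho ^ N * M * rho ^ k.
  move=> k hk s x; have hb := hyps_bound hf hM h0 k s x.
  have e : rho ^ N = rho ^ k * rho ^ (N - k)%nat by rewrite -pow_addn subnKC // ltnW.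
  have h1 : rho ^ (N - k)%nat <= 1 by apply: pow_le1; lra.
  have h2 : 0 <= rho ^ k by apply: pow_le; lra.
  have h3 : rho ^ N <= rho ^ k by rewrite e; nra.
  have h4 : 1 <= / rho ^ N * rho ^ k.
    have -> : 1 = / rho ^ N * rho ^ N by field; lra.
    apply: Rmult_le_compat_l => //; apply: Rlt_le; exact: Rinv_0_lt_compat.
  nra.
have H : forall n k, (k <= n)%nat -> forall s x, f k s x <= / rho ^ N * M * rho ^ k.
elim => [|n IH] k hk s x.
  by apply: small; apply: leq_ltn_trans hk _.
case: (ltnP k N) => hkN; first exact: small.
have e : k = ((k - N) + N)%nat by rewrite subnK.
rewrite e.
apply: Rle_trans (step f _ (k - N)%nat hf (hKM (k - N)%nat) _ s x) _.
  apply: IH; rewrite leq_subLR; apply: leq_trans hk _; by rewrite /N addnC addnS ltnS leq_addr.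
rewrite pow_addn.
have := hKM (k - N)%nat; nra.
by move=> k; exact: (H k k (leqnn k)).
Qed.

Lemma decay_cv f : standing_assumption p G Sterm -> hyps f ->
  forall s x, Un_cv (fun k => f k s x) 0.
Proof.
move=> hst hf s x.
have [rho [K [hrho [hK H]]]] := decay hst.
set M := rsum (fun s => rsum (fun x => f 0%nat s x)).
have hpos := proj1 hf.
have hM : 0 <= M by apply: rsum_nonneg => s1; apply: rsum_nonneg => x1; exact: hpos.
have h0 : forall s x, f 0%nat s x <= M.
  move=> s1 x1; apply: Rle_trans (rsum_pick _ _) (rsum_pick _ _).
    by move=> x2; exact: hpos.
  by move=> s2; apply: rsum_nonneg => x2; exact: hpos.
move=> eps heps.
have hKM : 0 < K * M + 1 by nra.
have [N0 hN0] := pow_lt_1_zero rho ltac:(rewrite Rabs_right; lra) (eps / (K * M + 1))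
  ltac:(apply: Rdiv_lt_0_compat; lra).
exists N0 => n hn; rewrite /R_dist Rminus_0_r Rabs_right; last exact/Rle_ge/hpos.
have := H f M hf hM h0 n s x.
have := hN0 n hn; rewrite Rabs_right; last by apply/Rle_ge/pow_le; lra.
move=> h1 h2.
have : (K * M + 1) * rho ^ n < (K * M + 1) * (eps / (K * M + 1)) by apply: Rmult_lt_compat_l.
have -> : (K * M + 1) * (eps / (K * M + 1)) = eps by field; lra.
have : 0 <= rho ^ n by apply: pow_le; lra.
nra.
Qed.

End Decay.

Lemma geo_le a b C rho : 0 <= rho < 1 -> 0 <= C ->
  (forall k, a <= b + C * rho ^ k) -> a <= b.
Proof.
move=> hr hC h; apply: Rnot_lt_le => hab.
have hpos : 0 < (a - b) / (C + 1) by apply: Rdiv_lt_0_compat; lra.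
have [N hN] := pow_lt_1_zero rho ltac:(rewrite Rabs_right; lra) _ hpos.
have := hN N (Nat.le_refl N); rewrite Rabs_right; last by apply/Rle_ge/pow_le; lra.
move=> h1; have h2 := h N.
have h3 : 0 <= rho ^ N by apply: pow_le; lra.
have : (C + 1) * rho ^ N < (C + 1) * ((a - b) / (C + 1)) by apply: Rmult_lt_compat_l; lra.
have -> : (C + 1) * ((a - b) / (C + 1)) = a - b by field; lra.
nra.
Qed.

Lemma lim_le (u : nat -> R) l B : Un_cv u l -> (forall n, u n <= B) -> l <= B.
Proof.
move=> hu hB; apply: Rnot_lt_le => hl.
have [N hN] := hu (l - B) ltac:(lra).
have := hN N (Nat.le_refl N); rewrite /R_dist => h.
have := Rle_abs (l - u N); rewrite Rabs_minus_sym; have := hB N; lra.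
Qed.

Lemma growing_le (u : nat -> R) k n : Un_growing u -> (k <= n)%nat -> u k <= u n.
Proof.
move=> hg; elim: n => [|n IH]; first by rewrite leqn0 => /eqP ->; lra.
rewrite leq_eqVlt => /orP [/eqP ->|h]; first lra.
have := hg n; have := IH h; lra.
Qed.

Lemma le_lim (u : nat -> R) l k : Un_growing u -> Un_cv u l -> u k <= l.
Proof.
move=> hg hu; apply: Rnot_lt_le => hl.
have [N hN] := hu (u k - l) ltac:(lra).
have := hN (maxn N k) (elimT leP (leq_maxl N k)).
rewrite /R_dist => h.
have := growing_le hg (leq_maxr N k).
have := Rle_abs (u (maxn N k) - l); lra.
Qed.

Lemma cv_const_eq (c l : R) : Un_cv (fun _ => c) l -> c = l.
Proof.
move=> h; apply: (UL_sequence (fun _ => c)) => // eps heps.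
by exists 0%nat => n _; rewrite /R_dist Rminus_diag Rabs_R0.
Qed.

Section Main.
Variables (S A : finType) (p : S -> A -> S -> R) (G Sterm : pred S).
Hypothesis Hp : is_kernel p.
Variable L : S -> bool -> R.
Variable pi_s : S -> bool -> A -> R.
Hypothesis Hpis : is_policy pi_s.
Hypothesis Hfeas : forall s x, Td p G Sterm pi_s L s x <= L s x.

Local Notation Tl := (Tloc p G Sterm).
Local Notation IsT := (IsTexp p G Sterm L).

Definition cc (s : S) (x : bool) : R := if Sterm s then 0 else dcost G s x.

Lemma cc_nonneg s x : 0 <= cc s x.
Proof. rewrite /cc /dcost; case: (Sterm s); [lra|case: (_ && _); lra]. Qed.

Lemma Tloc_PL q V s x : Tl q V s x = cc s x + PL p G Sterm q V s x.
Proof. by rewrite /Tloc /cc /PL /gsum; case: (Sterm s); rewrite ?Rplus_0_r. Qed.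

Lemma Tloc_mono q V V' s x : (forall a, 0 <= q a) -> (forall s x, V s x <= V' s x) ->
  Tl q V s x <= Tl q V' s x.
Proof. move=> hq h; rewrite !Tloc_PL; have := @PL_le S A p G Sterm Hp q V V' s x hq h; lra. Qed.

Lemma Tloc_nonneg q V s x : (forall a, 0 <= q a) -> (forall s x, 0 <= V s x) -> 0 <= Tl q V s x.
Proof. move=> hq h; rewrite Tloc_PL; have := cc_nonneg s x; have := @PL_nonneg S A p G Sterm Hp q V s x hq h; lra. Qed.

Lemma Texp_point V s x : exists w,
  (exists q, is_dist q /\ Tl q L s x <= L s x /\ Tl q V s x = w) /\
  (forall q, is_dist q -> Tl q L s x <= L s x -> Tl q V s x <= w).
Proof.
case hst: (Sterm s).
  exists 0; split.
    exists (pi_s s x); split; first exact: Hpis.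
    split; [exact: Hfeas|by rewrite /Tloc hst].
  by move=> q _ _; rewrite /Tloc hst; lra.
have := @LP_attain A (gsum p G V s x) (gsum p G L s x) (L s x - dcost G s x).
have e : forall q W, Tl q W s x = dcost G s x + rsum (fun a => q a * gsum p G W s x a).
  by move=> q W; rewrite /Tloc hst.
case.
  exists (pi_s s x); split; first exact: Hpis.
  have := Hfeas s x; rewrite /Td e; lra.
move=> q [hq [hc hmax]]; exists (Tl q V s x); split.
  by exists q; split => //; split => //; rewrite e; lra.
move=> q' hq' hc'; rewrite !e; have := hmax q' hq'; rewrite e in hc'.
move=> h; have := h ltac:(lra); lra.
Qed.

Lemma Texp_exists V : exists W, IsT V W.
Proof.
have [F hF] := functional_choice (fun z w => let: (s, x) := z in
  (exists q, is_dist q /\ Tl q L s x <= L s x /\ Tl q V s x = w) /\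
  (forall q, is_dist q -> Tl q L s x <= L s x -> Tl q V s x <= w))
  (fun z => let: (s, x) := z in Texp_point V s x).
by exists (fun s x => F (s, x)) => s x; exact: (hF (s, x)).
Qed.

Lemma IsT_mono V V' W W' : IsT V W -> IsT V' W' -> (forall s x, V s x <= V' s x) ->
  forall s x, W s x <= W' s x.
Proof.
move=> hW hW' h s x; have [[q [hq [hL <-]]] _] := hW s x.
apply: Rle_trans (proj2 (hW' s x) q hq hL); apply: Tloc_mono => //; by case: hq.
Qed.

Lemma IsT_nonneg V W : IsT V W -> (forall s x, 0 <= V s x) -> forall s x, 0 <= W s x.
Proof.
move=> hW h s x; have [[q [hq [_ <-]]] _] := hW s x; apply: Tloc_nonneg => //; by case: hq.
Qed.

Lemma IsT_diff V V' W W' : IsT V W -> IsT V' W' -> forall s x, exists q, is_dist q /\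
  Rabs (W s x - W' s x) <= PL p G Sterm q (fun s x => Rabs (V s x - V' s x)) s x.
Proof.
move=> hW hW' s x.
have [[q [hq [hL e]]] _] := hW s x; have [[q' [hq' [hL' e']]] _] := hW' s x.
have h1 := proj2 (hW' s x) q hq hL; have h2 := proj2 (hW s x) q' hq' hL'.
have d1 := @Tloc_diff S A p G Sterm q V V' s x; have d2 := @Tloc_diff S A p G Sterm q' V V' s x.
have a1 := @PL_abs S A p G Sterm Hp q (fun s x => V s x - V' s x) s x (proj1 hq).
have a2 := @PL_abs S A p G Sterm Hp q' (fun s x => V s x - V' s x) s x (proj1 hq').
case: (Rle_dec 0 (W s x - W' s x)) => hs.
  exists q; split => //; rewrite Rabs_right; last lra.
  have := Rle_abs (PL p G Sterm q (fun s x => V s x - V' s x) s x); lra.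
exists q'; split => //; rewrite Rabs_left; last lra.
have := Rle_abs (- PL p G Sterm q' (fun s x => V s x - V' s x) s x); rewrite Rabs_Ropp; lra.
Qed.

Hypothesis Hstand : standing_assumption p G Sterm.

Lemma funext2 (V1 V2 : S -> bool -> R) : (forall s x, V1 s x = V2 s x) -> V1 = V2.
Proof.
move=> h; apply: functional_extensionality => s; apply: functional_extensionality => x; exact: h.
Qed.

Lemma fixed_unique V1 V2 : IsT V1 V1 -> IsT V2 V2 -> V1 = V2.
Proof.
move=> h1 h2; apply: funext2 => s x.
pose e := fun (_ : nat) s x => Rabs (V1 s x - V2 s x).
have he : hyps p G Sterm e.
  split; first by move=> *; apply: Rabs_pos.
  move=> k s' x'; exact: (IsT_diff h1 h2 s' x').
have := cv_const_eq (@decay_cv S A p G Sterm Hp e Hstand he s x).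
case: (Rcase_abs (V1 s x - V2 s x)) => hh; [rewrite Rabs_left //| rewrite Rabs_right //]; lra.
Qed.

Lemma vi_conv Vexp (Vs : nat -> S -> bool -> R) : IsT Vexp Vexp ->
  (forall k, IsT (Vs k) (Vs k.+1)) -> forall s x, Un_cv (fun k => Vs k s x) (Vexp s x).
Proof.
move=> hfix hVs s x.
pose e := fun k s x => Rabs (Vs k s x - Vexp s x).
have he : hyps p G Sterm e.
  split; first by move=> *; apply: Rabs_pos.
  move=> k s' x'; exact: (IsT_diff (hVs k) hfix s' x').
have hcv := @decay_cv S A p G Sterm Hp e Hstand he s x.
move=> eps heps; have [N hN] := hcv eps heps; exists N => n hn.
by have := hN n hn; rewrite /R_dist /e Rminus_0_r Rabs_Rabsolu.
Qed.

Lemma fixed_exists : exists V, IsT V V /\ (forall s x, 0 <= V s x).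
Proof.
have [Tf hTf] := functional_choice (fun V W => IsT V W) Texp_exists.
pose Vs := fun k => iter k Tf (fun _ _ => 0).
have hpos : forall k s x, 0 <= Vs k s x.
  elim => [|k IH] s x; [rewrite /=; lra| exact: (IsT_nonneg (hTf _) IH)].
have hinc : forall k s x, Vs k s x <= Vs k.+1 s x.
  elim => [|k IH] s x; first exact: (hpos 1%nat).
  exact: (IsT_mono (hTf _) (hTf _) IH).
pose d := fun k s x => Rabs (Vs k.+1 s x - Vs k s x).
have hd : hyps p G Sterm d.
  split; first by move=> *; apply: Rabs_pos.
  move=> k s x; exact: (IsT_diff (hTf (Vs k.+1)) (hTf (Vs k)) s x).
have [rho [K [hrho [hK hdec]]]] := @decay S A p G Sterm Hp Hstand.
set M0 := rsum (fun s => rsum (fun x => d 0%nat s x)).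
have hM0 : 0 <= M0 by apply: rsum_nonneg => s1; apply: rsum_nonneg => x1; exact: Rabs_pos.
have h0 : forall s x, d 0%nat s x <= M0.
  move=> s1 x1; apply: Rle_trans (rsum_pick _ _) (rsum_pick _ _).
    by move=> x2; exact: Rabs_pos.
  by move=> s2; apply: rsum_nonneg => x2; exact: Rabs_pos.
set C := K * M0.
have hC : 0 <= C by rewrite /C; nra.
have hdk : forall k s x, Vs k.+1 s x - Vs k s x <= C * rho ^ k.
  move=> k s x; have := hdec d M0 hd hM0 h0 k s x.
  by rewrite /d Rabs_right; [done| have := hinc k s x; lra].
have hE : forall k, 0 <= C * rho ^ k / (1 - rho).
  move=> k; rewrite /Rdiv; apply: Rmult_le_pos; last by apply: Rlt_le; apply: Rinv_0_lt_compat; lra.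
  apply: Rmult_le_pos => //; apply: pow_le; lra.
have hgen : forall k n s x, Vs (k + n)%nat s x + C * rho ^ (k + n)%nat / (1 - rho)
    <= Vs k s x + C * rho ^ k / (1 - rho).
  move=> k; elim => [|n IH] s x; first by rewrite addn0; lra.
  rewrite addnS.
  have e : C * rho ^ (k + n)%nat.+1 / (1 - rho) = C * rho ^ (k + n)%nat / (1 - rho) - C * rho ^ (k + n)%nat.
    by rewrite /=; field; lra.
  rewrite e; have := IH s x; have := hdk (k + n)%nat s x; lra.
have hcv : forall s x, exists l, Un_cv (fun k => Vs k s x) l.
  move=> s x.
  have hub : has_ub (fun k => Vs k s x).
    exists (C / (1 - rho)) => y [i ->]; have := hgen 0%nat i s x; rewrite add0n /= => hh.
    have := hE i; have : C * 1 / (1 - rho) = C / (1 - rho) by field; lra.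
    lra.
  have [l hl] := growing_cv _ (fun k => hinc k s x) hub.
  by exists l.
have [Vexp hVexp] := functional_choice (fun (z : S * bool) l => Un_cv (fun k => Vs k z.1 z.2) l)
  (fun z => hcv z.1 z.2).
pose V := fun s x => Vexp (s, x).
have hle : forall k s x, Vs k s x <= V s x.
  by move=> k s x; exact: (le_lim k (fun n => hinc n s x) (hVexp (s, x))).
have htail : forall k s x, V s x <= Vs k s x + C * rho ^ k / (1 - rho).
  move=> k s x; apply: (lim_le (hVexp (s, x))) => n /=.
  case: (leqP k n) => hkn.
    have := hgen k (n - k)%nat s x; rewrite subnKC // => hh.
    have := hE n; lra.
  have := growing_le (fun m => hinc m s x) (ltnW hkn); have := hE k; lra.
have hW := hTf V; set W := Tf V in hW.
have hV0 : forall s x, 0 <= V s x by move=> s x; have := hle 0%nat s x; rewrite /=; lra.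
have h1 : forall s x, V s x <= W s x.
  move=> s x; apply: (lim_le (hVexp (s, x))) => -[|n] /=.
    rewrite /=; exact: (IsT_nonneg hW hV0).
  exact: (IsT_mono (hTf (Vs n)) hW (hle n)).
have h2 : forall s x, W s x <= V s x.
  move=> s x; apply: (geo_le (C := C / (1 - rho)) hrho).
    by rewrite /Rdiv; apply: Rmult_le_pos => //; apply: Rlt_le; apply: Rinv_0_lt_compat; lra.
  move=> k.
  have [q [hq hq']] := IsT_diff hW (hTf (Vs k)) s x.
  have hb : PL p G Sterm q (fun s x => Rabs (V s x - Vs k s x)) s x <= C * rho ^ k / (1 - rho).
    apply: (@PL_bound S A p G Sterm Hp) => // s' x'.
    rewrite Rabs_right; [have := htail k s' x'; lra| have := hle k s' x'; lra].
  have hk1 := hle k.+1 s x.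
  have : W s x - Tf (Vs k) s x <= Rabs (W s x - Tf (Vs k) s x) by apply: Rle_abs.
  have -> : C / (1 - rho) * rho ^ k = C * rho ^ k / (1 - rho) by field; lra.
  rewrite /= in hk1; lra.
exists V; split => //.
have e : W = V by apply: funext2 => s x; apply: Rle_antisym; [exact: h2| exact: h1].
by rewrite e in hW.
Qed.

End Main.

Lemma sum_f_R0_shift (f : nat -> R) n : sum_f_R0 f n.+1 = f 0%nat + sum_f_R0 (fun t => f t.+1) n.
Proof. elim: n => [|n IH] /=; first ring. rewrite /= in IH; rewrite IH; ring. Qed.

Lemma sum_f_R0_scal (c : R) (f : nat -> R) n : sum_f_R0 (fun t => c * f t) n = c * sum_f_R0 f n.
Proof. elim: n => [|n IH] /=; [ring| rewrite IH; ring]. Qed.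

Lemma sum_rsum (T : finType) (F : nat -> T -> R) n :
  sum_f_R0 (fun t => rsum (F t)) n = rsum (fun i => sum_f_R0 (fun t => F t i) n).
Proof.
elim: n => [|n IH] /=; first done.
by rewrite IH -rsum_plus.
Qed.

Lemma rsum_pair (S : finType) (F : S -> bool -> R) :
  rsum (fun s => rsum (fun x => F s x)) = rsum (fun z : S * bool => F z.1 z.2).
Proof. by rewrite /rsum pair_big. Qed.

Lemma delta_pair (S : finType) (F : S * bool -> R) a b :
  rsum (fun z : S * bool => (if (z.1 == a) && (z.2 == b) then 1 else 0) * F z) = F (a, b).
Proof.
rewrite -(rsum_delta_mul (a, b) F); apply: rsum_ext => -[s x] /=.
by rewrite xpair_eqE.
Qed.

Section Eval.
Variables (S A : finType) (p : S -> A -> S -> R) (G Sterm : pred S).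
Variable pi : S -> bool -> A -> R.

Definition Kt (s : S) (x : bool) (s' : S) (x' : bool) : R :=
  if Sterm s then 0 else if x' == xnext G s x then rsum (fun a => pi s x a * p s a s') else 0.

Local Notation mu := (mu p G Sterm pi).

Lemma mu_S t s0 x0 s' x' :
  mu s0 x0 t.+1 s' x' = rsum (fun z : S * bool => mu s0 x0 t z.1 z.2 * Kt z.1 z.2 s' x').
Proof.
rewrite -(rsum_pair (fun s x => mu s0 x0 t s x * Kt s x s' x')) /=.
apply: rsum_ext => s; apply: rsum_ext => x; rewrite /Kt.
case: (Sterm s); first ring.
case: (_ == _); ring.
Qed.

Lemma mu_first t s0 x0 s' x' :
  mu s0 x0 t.+1 s' x' = rsum (fun w : S * bool => Kt s0 x0 w.1 w.2 * mu w.1 w.2 t s' x').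
Proof.
elim: t s' x' => [|t IH] s' x'.
  rewrite mu_S /=.
  rewrite (delta_pair (fun z => Kt z.1 z.2 s' x') s0 x0) /=.
  rewrite -(delta_pair (fun z => Kt s0 x0 z.1 z.2) s' x').
  apply: rsum_ext => -[s x] /=; rewrite [s' == s]eq_sym [x' == x]eq_sym; ring.
rewrite mu_S.
rewrite (rsum_ext (g := fun z : S * bool => rsum (fun w : S * bool =>
   Kt s0 x0 w.1 w.2 * (mu w.1 w.2 t z.1 z.2 * Kt z.1 z.2 s' x')))); last first.
  move=> z; rewrite IH -rsum_scalr; apply: rsum_ext => w; ring.
rewrite rsum_exchange; apply: rsum_ext => w.
by rewrite rsum_scal mu_S.
Qed.

Definition ccz (s : S) (x : bool) : R := if Sterm s then 0 else dcost G s x.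

Lemma cost_rsum t s0 x0 :
  cost_term p G Sterm pi s0 x0 t = rsum (fun z : S * bool => mu s0 x0 t z.1 z.2 * ccz z.1 z.2).
Proof.
rewrite /cost_term -(rsum_pair (fun s x => mu s0 x0 t s x * ccz s x)).
apply: rsum_ext => s; apply: rsum_ext => x; rewrite /ccz; case: (Sterm s); ring.
Qed.

Lemma cost_0 s0 x0 : cost_term p G Sterm pi s0 x0 0 = ccz s0 x0.
Proof.
rewrite cost_rsum /=; exact: (delta_pair (fun z => ccz z.1 z.2) s0 x0).
Qed.

Lemma cost_S t s0 x0 : cost_term p G Sterm pi s0 x0 t.+1 =
  rsum (fun w : S * bool => Kt s0 x0 w.1 w.2 * cost_term p G Sterm pi w.1 w.2 t).
Proof.
rewrite cost_rsum.
rewrite (rsum_ext (g := fun z : S * bool => rsum (fun w : S * bool =>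
   Kt s0 x0 w.1 w.2 * (mu w.1 w.2 t z.1 z.2 * ccz z.1 z.2)))); last first.
  move=> z; rewrite mu_first -rsum_scalr; apply: rsum_ext => w; ring.
rewrite rsum_exchange; apply: rsum_ext => w.
by rewrite rsum_scal cost_rsum.
Qed.

Definition Ut (n : nat) (s : S) (x : bool) : R := sum_f_R0 (cost_term p G Sterm pi s x) n.

Lemma Ut_S n s x : Ut n.+1 s x = ccz s x + rsum (fun w : S * bool => Kt s x w.1 w.2 * Ut n w.1 w.2).
Proof.
rewrite /Ut sum_f_R0_shift cost_0; congr (_ + _).
rewrite (sum_eq _ (fun t => rsum (fun w : S * bool =>
   Kt s x w.1 w.2 * cost_term p G Sterm pi w.1 w.2 t))); last by move=> i _; rewrite cost_S.
rewrite sum_rsum; apply: rsum_ext => w; exact: sum_f_R0_scal.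
Qed.

Lemma Td_K V s x : Td p G Sterm pi V s x = ccz s x + rsum (fun w : S * bool => Kt s x w.1 w.2 * V w.1 w.2).
Proof.
rewrite /Td /Tloc /ccz; case hs: (Sterm s).
  rewrite rsum0 ?Rplus_0_r // => w; rewrite /Kt hs; ring.
congr (_ + _).
rewrite -(rsum_pair (fun s' x' => Kt s x s' x' * V s' x')).
rewrite (rsum_ext (g := fun s' => rsum (fun a => pi s x a * p s a s') * V s' (xnext G s x))); last first.
  move=> s'; rewrite rsum_bool /Kt hs; case: (xnext G s x) => /=; ring.
rewrite (rsum_ext (g := fun s' => rsum (fun a => pi s x a * p s a s' * V s' (xnext G s x)))); last first.
  by move=> s'; rewrite rsum_scalr.
rewrite rsum_exchange; apply: rsum_ext => a; rewrite -rsum_scal; apply: rsum_ext => s'; ring.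
Qed.

Lemma Ut_0 s x : Ut 0 s x = Td p G Sterm pi (fun _ _ => 0) s x.
Proof.
rewrite Td_K /Ut /= cost_0 rsum0 ?Rplus_0_r // => w; ring.
Qed.

Lemma Ut_step n s x : Ut n.+1 s x = Td p G Sterm pi (Ut n) s x.
Proof. by rewrite Ut_S Td_K. Qed.

Lemma mu_nonneg t s0 x0 s x : (forall s x a, 0 <= pi s x a) -> (forall s a s', 0 <= p s a s') ->
  0 <= mu s0 x0 t s x.
Proof.
move=> hpi hp; elim: t s x => [|t IH] s x /=; first by case: (_ && _); lra.
apply: rsum_nonneg => s1; apply: rsum_nonneg => x1.
case: (Sterm s1); first lra.
case: (_ == _); last lra.
apply: Rmult_le_pos => //; apply: rsum_nonneg => a; exact: Rmult_le_pos.
Qed.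

Lemma Ut_growing s x : (forall s x a, 0 <= pi s x a) -> (forall s a s', 0 <= p s a s') ->
  Un_growing (fun n => Ut n s x).
Proof.
move=> hpi hp n; rewrite /Ut /=.
have : 0 <= cost_term p G Sterm pi s x n.+1.
  apply: rsum_nonneg => s1; apply: rsum_nonneg => x1; case: (Sterm s1); first lra.
  apply: Rmult_le_pos; first exact: mu_nonneg.
  rewrite /dcost; case: (_ && _); lra.
lra.
Qed.

End Eval.

Unset Implicit Arguments.

Theorem proposition2
  (S A : finType) (p : S -> A -> S -> R) (G Sterm : pred S)
  (Hp : is_kernel p)
  (Hstand : standing_assumption p G Sterm)
  (alpha : R) (Halpha : 0 < alpha < 1) (S0 : pred S)
  (L : S -> bool -> R) (pi_s : S -> bool -> A -> R)
  (Hpis : is_policy pi_s)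
  (HL : is_lyapunov p G Sterm alpha S0 pi_s L) :
  (forall V : S -> bool -> R, exists W, IsTexp p G Sterm L V W) /\
  (exists Vexp : S -> bool -> R,
     (forall V', IsTexp p G Sterm L V' V' <-> V' = Vexp) /\
     (forall Vs : nat -> S -> bool -> R,
        (forall k, IsTexp p G Sterm L (Vs k) (Vs k.+1)) ->
        forall s x, Un_cv (fun k => Vs k s x) (Vexp s x)) /\
     (forall pi_e : S -> bool -> A -> R,
        is_policy pi_e ->
        (forall s x, Td p G Sterm pi_e L s x <= L s x /\
                     Td p G Sterm pi_e Vexp s x = Vexp s x) ->
        (forall s x, HasValue p G Sterm pi_e s x (Vexp s x)) /\
        (forall s0 (pi : S -> bool -> A -> R),
           is_policy pi ->
           (forall s x, Td p G Sterm pi L s x <= L s x) ->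
           exists v, HasValue p G Sterm pi s0 true v /\ v <= Vexp s0 true))).
Proof.
have Hfeas : forall s x, Td p G Sterm pi_s L s x <= L s x := proj1 (proj2 HL).
split; first exact: (@Texp_exists S A p G Sterm L pi_s Hpis Hfeas).
have [Vexp [hfix hpos]] := @fixed_exists S A p G Sterm Hp L pi_s Hpis Hfeas Hstand.
exists Vexp; split.
  move=> V'; split; first by move=> h; exact: (@fixed_unique S A p G Sterm Hp L Hstand V' Vexp h hfix).
  by move=> ->.
split; first by move=> Vs hVs; exact: (@vi_conv S A p G Sterm Hp L Hstand Vexp Vs hfix hVs).
move=> pi_e hpe hpe2; split.
  move=> s x.
  pose e := fun n s x => Rabs (Ut p G Sterm pi_e n s x - Vexp s x).
  have he : hyps p G Sterm e.
    split; first by move=> *; apply: Rabs_pos.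
    move=> n s' x'; exists (pi_e s' x'); split; first exact: hpe.
    rewrite /e Ut_step -{1}(proj2 (hpe2 s' x')) /Td Tloc_diff.
    exact: (@PL_abs S A p G Sterm Hp _ _ s' x' (proj1 (hpe s' x'))).
  have hcv := @decay_cv S A p G Sterm Hp e Hstand he s x.
  move=> eps heps; have [N hN] := hcv eps heps; exists N => n hn.
  by have := hN n hn; rewrite /R_dist /e Rminus_0_r Rabs_Rabsolu.
move=> s0 pi hpi hfeas.
have hup : forall s x, Td p G Sterm pi Vexp s x <= Vexp s x.
  by move=> s x; exact: (proj2 (hfix s x) (pi s x) (hpi s x) (hfeas s x)).
have hbd : forall n s x, Ut p G Sterm pi n s x <= Vexp s x.
  elim => [|n IH] s x.
    rewrite Ut_0; apply: Rle_trans (hup s x).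
    by apply: (@Tloc_mono S A p G Sterm Hp) => //; case: (hpi s x).
  rewrite Ut_step; apply: Rle_trans (hup s x).
  by apply: (@Tloc_mono S A p G Sterm Hp) => //; case: (hpi s x).
have hg : Un_growing (fun n => Ut p G Sterm pi n s0 true).
  apply: Ut_growing; [by move=> s x a; case: (hpi s x) | by case: Hp].
have hub : has_ub (fun n => Ut p G Sterm pi n s0 true).
  by exists (Vexp s0 true) => y [i ->]; exact: hbd.
have [v hv] := growing_cv _ hg hub.
exists v; split; first exact: hv.
exact: (lim_le hv (fun n => hbd n s0 true)).
Qed.
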